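(* Let $d$ be a prime number and $p$ an odd prime, and let $T_d$ be the $d$-th Chebyshev polynomial of the first kind, viewed as a self-map of $\mathbb{A}^1(\mathbb{F}_p)=\mathbb{F}_p$. If $d=2$, or if $2d=p+1$, then $T_d$ has exactly $\frac{p-1}{2}$ leaves, i.e. exactly $\frac{p-1}{2}$ points $x\in\mathbb{F}_p$ have no preimage under $T_d$.
   Context: The $d$-th Chebyshev polynomial of the first kind $T_d\in\mathbb{Z}[z]$ is the monic degree-$d$ polynomial with $T_d(z+z^{-1})=z^d+z^{-d}$, reduced modulo $p$. A leaf of the functional graph of $T_d$ is a point with no preimage in $\mathbb{F}_p$. *)

(* Defs.v *)
From mathcomp Require Import all_boot all_order all_algebra.
From mathcomp Require Import ring.
Set Implicit Arguments. Unset Strict Implicit. Unset Printing Implicit Defensive.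
Import GRing.Theory.
Local Open Scope ring_scope.

(* Chebyshev polynomials of the first kind in the monic normalisation
   T_d(z + z^-1) = z^d + z^-d, over Z: T_0 = 2, T_1 = X,
   T_{n+2} = X T_{n+1} - T_n. *)
Fixpoint cheb_pair (n : nat) : {poly int} * {poly int} :=
  match n with
  | 0%N => (2%:P, 'X)
  | n'.+1 => let: (a, b) := cheb_pair n' in (b, 'X * b - a)
  end.

Definition cheb (d : nat) : {poly int} := (cheb_pair d).1.

Definition cheb_mod (p d : nat) : {poly 'F_p} := map_poly intr (cheb d).

Definition leaves (p d : nat) : {set 'F_p} :=
  [set x : 'F_p | [forall y : 'F_p, (cheb_mod p d).[y] != x]].

Lemma cheb_pairE (F : fieldType) (z : F) (n : nat) : z != 0 ->
  (map_poly intr (cheb_pair n).1).[z + z^-1] = z ^+ n + z^-1 ^+ n /\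
  (map_poly intr (cheb_pair n).2).[z + z^-1] = z ^+ n.+1 + z^-1 ^+ n.+1.
Proof.
move=> z0; elim: n => [|n [IH1 IH2]] /=.
  rewrite map_polyC map_polyX !hornerE /= expr0 expr1 expr1.
  by split=> //; rewrite -[2%:~R]/(1 + 1 : F).
case: (cheb_pair n) IH1 IH2 => a b /= IH1 IH2; split=> //.
rewrite rmorphB rmorphM /= map_polyX !hornerE IH1 IH2.
rewrite !exprS; have zz : z * z^-1 = 1 by rewrite mulfV.
have e : (z + z^-1) * (z * z ^+ n + z^-1 * z^-1 ^+ n) - (z ^+ n + z^-1 ^+ n)
  = z * (z * z ^+ n) + z^-1 * (z^-1 * z^-1 ^+ n) + (z * z^-1 - 1) * (z^+n + z^-1^+n).
  by ring.
by rewrite e zz subrr mul0r addr0.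
Qed.

(* Main.v *)
Require Import Defs.
From mathcomp Require Import all_boot all_order all_algebra.
From mathcomp Require Import all_field ring zify.
Import GRing.Theory.
Set Implicit Arguments. Unset Strict Implicit. Unset Printing Implicit Defensive.
Local Open Scope ring_scope.


Lemma card_img2 (T U : finType) (A : {set T}) (f : T -> U) (s : T -> T) :
  {in A, forall x, s x \in A} ->
  {in A &, forall x y, (f x == f y) = (y == x) || (y == s x)} ->
  {in A, forall x, s (s x) = x} ->
  (#|f @: A| * 2 = #|A| + #|[set x in A | s x == x]|)%N.
Proof.
move=> sA fE ss.
have -> : (#|A| + #|[set x in A | s x == x]| = \sum_(x in A) (1 + (s x == x)))%N.
  rewrite big_split /= sum1_card; congr (_ + _)%N.
  rewrite -sum1_card big_mkcond /= [in RHS]big_mkcond /=.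
  by apply: eq_bigr => x _; rewrite inE; case: (x \in A); case: (s x == x).
rewrite (partition_big f (mem (f @: A))) /=; last first.
  by move=> x xA; apply/imsetP; exists x.
rewrite -sum_nat_const; apply: eq_bigr => u /imsetP [a aA ->].
rewrite (eq_bigl (mem [set a; s a])); last first.
  move=> x /=; rewrite !inE; case xA: (x \in A) => /=.
    by rewrite eq_sym fE.
  apply/esym/negbTE; apply/orP => -[] /eqP ex; rewrite ex in xA.
    by rewrite aA in xA.
  by rewrite sA in xA.
case: (eqVneq (s a) a) => sa.
  by rewrite sa setUid big_set1 sa eqxx.
rewrite big_setU1 /=; last by rewrite inE eq_sym.
rewrite big_set1 ss // (negbTE sa).
by have -> : (a == s a) = false by rewrite eq_sym (negbTE sa).
Qed.

Lemma cheb_comm (R : comNzRingType) (x z w : R) : z + w = x -> z * w = 1 -> forall n,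
  (map_poly intr (cheb_pair n).1).[x] = z ^+ n + w ^+ n /\
  (map_poly intr (cheb_pair n).2).[x] = z ^+ n.+1 + w ^+ n.+1.
Proof.
move=> zw1 zw2; elim=> [|n [IH1 IH2]] /=.
  rewrite map_polyC map_polyX !hornerE /= expr0 expr1 expr1 zw1.
  by split=> //; rewrite -[2%:~R]/(1 + 1 : R).
case: (cheb_pair n) IH1 IH2 => a b /= IH1 IH2; split=> //.
rewrite rmorphB rmorphM /= map_polyX !hornerE IH1 IH2 -zw1 !exprS.
have e : (z + w) * (z * z ^+ n + w * w ^+ n) - (z ^+ n + w ^+ n)
  = z * (z * z ^+ n) + w * (w * w ^+ n) + (z * w - 1) * (z^+n + w^+n) by ring.
by rewrite e zw2 subrr mul0r addr0.
Qed.

Lemma cheb_map (F R : nzRingType) (f : {rmorphism F -> R}) (q : {poly int}) (y : F) :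
  f (map_poly intr q).[y] = (map_poly intr q).[f y].
Proof.
rewrite -horner_map -map_poly_comp; congr (_.[_]).
by apply: eq_map_poly => n /=; rewrite rmorph_int.
Qed.

Lemma fermat p (a : 'F_p) : prime p -> a ^+ p = a.
Proof. by move=> pp; have := expf_card a; rewrite card_Fp. Qed.

Lemma fermat1 p (a : 'F_p) : prime p -> a != 0 -> a ^+ p.-1 = 1.
Proof.
move=> pp a0; apply: (mulfI a0); rewrite mulr1 -exprS prednK ?prime_gt0 //.
exact: fermat.
Qed.

Lemma two_neq0 p : prime p -> odd p -> (2 : 'F_p) != 0.
Proof.
move=> pp op; apply/negP => /eqP h.
have : (p %| 2)%N by rewrite (dvdn_pcharf (pchar_Fp pp)) h.
rewrite dvdn_prime2 // => /eqP p2; by rewrite p2 in op.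
Qed.

Lemma negx_eq p (x : 'F_p) : prime p -> odd p -> (- x == x) = (x == 0).
Proof.
move=> pp op; apply/eqP/eqP => [h|->]; last by rewrite oppr0.
have : 2 * x = 0 by rewrite mulr2n mulrDl mul1r -{1}h addNr.
by move/eqP; rewrite mulf_eq0 (negbTE (two_neq0 pp op)) => /eqP.
Qed.

Lemma half_pred p : prime p -> odd p -> p.-1 = (p./2 * 2)%N /\ (0 < p./2)%N.
Proof.
move=> pp op.
have h := odd_halfK op.
have p2 : p != 2 by apply: contraTneq op => ->.
have p1 := prime_gt1 pp.
split; first by rewrite muln2 h.
move: h p1; case: p./2 => // h.
by case: p {pp op p2} h => [|[|q]].
Qed.

Lemma card_sq p : prime p -> odd p ->
  (#|(fun t : 'F_p => (t * t)%R) @: [set~ (0 : 'F_p)%R]| * 2)%N = p.-1.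
Proof.
move=> pp op.
rewrite (card_img2 (s := -%R)).
- have -> : [set x in [set~ (0 : 'F_p)] | - x == x] = set0.
    by apply/setP => x; rewrite !inE negx_eq // andNb.
  by rewrite cards0 addn0 cardsC1 card_Fp.
- by move=> x; rewrite !inE oppr_eq0.
- by move=> x y _ _; rewrite -!expr2 eq_sym eqf_sqr.
- by move=> x _; rewrite opprK.
Qed.

Lemma euler p (c : 'F_p) : prime p -> odd p -> (forall t : 'F_p, t * t != c) ->
  c ^+ p./2 = -1.
Proof.
move=> pp op nsq.
have c0 : c != 0 by apply: contra (nsq 0) => /eqP ->; rewrite mul0r.
have [pm m0] := half_pred pp op.
set m := p./2 in pm m0 *.
have e2 : (c ^+ m) ^+ 2 = 1 by rewrite -exprM -pm fermat1.
have : (c ^+ m - 1) * (c ^+ m + 1) = 0 by rewrite -subr_sqr e2 expr1n subrr.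
move/eqP; rewrite mulf_eq0 => /orP [|]; last by rewrite addr_eq0 => /eqP.
rewrite subr_eq0 => /eqP e1; exfalso.
set Q := (fun t : 'F_p => (t * t)%R) @: [set~ 0].
have cQ : c \notin Q.
  by apply/imsetP => -[t _ ct]; move: (nsq t); rewrite ct eqxx.
have hQ := card_sq pp op; rewrite -/Q pm in hQ.
have {}hQ : #|Q| = m by apply/eqP; rewrite -(eqn_pmul2r (isT : (0 < 2)%N)) hQ.
have q0 : ('X^m - 1 : {poly 'F_p}) != 0.
  by rewrite -size_poly_eq0 -polyC1 size_XnsubC.
have := max_poly_roots q0 (rs := enum (c |: Q)).
rewrite enum_uniq -polyC1 size_XnsubC // -cardE cardsU1 cQ hQ ltnn.
move=> H; suff : false by []; apply: H => //.
apply/allP => x; rewrite mem_enum in_setU1 => /orP [/eqP ->|].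
  by rewrite /root !hornerE e1 subrr.
case/imsetP => t; rewrite in_setC1 => t0 ->.
by rewrite /root !hornerE -expr2 -exprM mulnC -pm fermat1 // subrr.
Qed.

Lemma nonS p d (y : 'F_p) : prime p -> odd p -> (2 * d = p + 1)%N ->
  (forall t : 'F_p, t * t != y ^+ 2 / 4 - 1) ->
  (cheb_mod p d).[y] ^+ 2 = 4.
Proof.
move=> pp op hd nsq.
set c := y ^+ 2 / 4 - 1.
have ec := euler pp op nsq; rewrite -/c in ec.
have [pm m0] := half_pred pp op.
have t0 := two_neq0 pp op.
have f0 : (4 : 'F_p) != 0.
  by rewrite (_ : 4 = 2 * 2 :> 'F_p) ?mulf_neq0 // -natrM.
set h : {poly 'F_p} := 'X^2 - c%:P.
have hm : mk_monic h = h by rewrite /mk_monic size_XnsubC // monicXnsubC.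
have iota_inj : injective (qpolyC h).
  move=> a b /(congr1 val) /= e; apply: polyC_inj; move: e; by rewrite ?qpolyCE.
pose X := in_qpoly h 'X.
have X2 : X ^+ 2 = (qpolyC h) c.
  rewrite /X -rmorphXn /=.
  have -> : ('X^2 : {poly 'F_p}) = h + c%:P by rewrite /h subrK.
  have ph : in_qpoly h h = 0.
    apply: val_inj => /=.
    by rewrite hm Pdiv.CommonRing.rmodpp //; exact: mulrC.
  rewrite rmorphD /= ph add0r; apply: val_inj => /=.
  by rewrite hm Pdiv.CommonRing.rmodp_small // size_XnsubC // (leq_ltn_trans (size_polyC_leq1 _)).
pose z := (qpolyC h) (y / 2) + X.
pose w := (qpolyC h) (y / 2) - X.
have zw1 : z + w = (qpolyC h) y.
  rewrite /z /w addrACA subrr addr0 -rmorphD /=; congr (qpolyC h).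
  by field.
have zw2 : z * w = 1.
  rewrite /z /w mulrC -subr_sqr X2 -rmorphXn -rmorphB /=.
  rewrite -(rmorph1 (qpolyC h)); congr (qpolyC h).
  by rewrite /c; field; rewrite f0 t0.
have pA : p \in [pchar {poly %/ h}] by rewrite pchar_qpoly pchar_Fp.
have ip : forall a, (qpolyC h) a ^+ p = (qpolyC h) a by move=> a; rewrite -rmorphXn fermat.
have Xp : X ^+ p = - X.
  have pe : p = (p./2 * 2).+1 by rewrite -pm prednK // prime_gt0.
  have -> : X ^+ p = X ^+ (p./2 * 2).+1 by congr (X ^+ _).
  rewrite exprS mulnC exprM X2 -rmorphXn /= ec.
  by rewrite ?polyCN !rmorphN ?polyC1 !rmorph1 mulrN1.
have fz : z ^+ p = w.
  by rewrite /z -(pFrobenius_autE pA) pFrobenius_autD_comm; [rewrite !pFrobenius_autE ip Xp|exact: mulrC].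
have fw : w ^+ p = z.
  by rewrite /w -(pFrobenius_autE pA) pFrobenius_autB_comm; [rewrite !pFrobenius_autE ip Xp opprK|exact: mulrC].
apply: iota_inj.
have e := cheb_map (qpolyC h) (cheb d) y.
rewrite (rmorphXn (qpolyC h)) /cheb_mod e.
have [-> _] := cheb_comm zw1 zw2 d.
have zp1 : z ^+ (2 * d) = 1 by rewrite hd addn1 exprSr fz mulrC zw2.
have wp1 : w ^+ (2 * d) = 1 by rewrite hd addn1 exprSr fw zw2.
rewrite (_ : (z ^+ d + w ^+ d) ^+ 2 = z ^+ (2 * d) + w ^+ (2 * d) + 2 * (z * w) ^+ d); last first.
  by rewrite mulnC !exprM exprMn; ring.
rewrite zp1 wp1 zw2 expr1n rmorph_nat.
ring.
Qed.

Lemma cardI2 p : prime p -> odd p ->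
  (#|[set (cheb_mod p 2).[y] | y : 'F_p]| * 2)%N = p.+1.
Proof.
move=> pp op.
have TE : forall y : 'F_p, (cheb_mod p 2).[y] = (fun u => u - 2) ((fun t => t * t) y).
  move=> y; rewrite /cheb_mod /cheb /= rmorphB rmorphM /= map_polyX map_polyC !hornerE /=.
  by rewrite -[2%:~R]/(1 + 1 : 'F_p).
have -> : [set (cheb_mod p 2).[y] | y : 'F_p] =
    (fun u => u - 2) @: ((fun t => t * t) @: [set: 'F_p]).
  apply/setP => x; apply/imsetP/imsetP => [[y _ ->]|[u /imsetP [y _ ->] ->]].
    by exists (y * y); [apply/imsetP; exists y|rewrite TE].
  by exists y; rewrite ?TE.
rewrite card_imset; last exact: addIr.
rewrite (card_img2 (s := -%R)).
- have -> : [set x in [set: 'F_p] | - x == x] = [set 0].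
    by apply/setP => x; rewrite !inE negx_eq.
  by rewrite cards1 cardsT card_Fp // addn1.
- by [].
- by move=> x y _ _; rewrite -!expr2 eq_sym eqf_sqr.
- by move=> x _; rewrite opprK.
Qed.

Lemma cardIodd p d : prime p -> odd p -> prime d -> d != 2%N -> (2 * d = p + 1)%N ->
  (#|[set (cheb_mod p d).[y] | y : 'F_p]| * 2)%N = p.+1.
Proof.
move=> pp op pd d2 hd.
have [pm m0] := half_pred pp op.
set m := p./2 in pm m0.
have pe : p = (m * 2).+1 by rewrite -pm prednK // prime_gt0.
have dm : d = m.+1.
  by move: hd; rewrite pe; lia.
have od : odd d by case: (even_prime pd) => // /eqP; rewrite (negbTE d2).
have em : ~~ odd m by rewrite dm /= in od.
pose e (u : 'F_p) := u ^+ m.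
have e2 : forall u, u != 0 -> e u = 1 \/ e u = -1.
  move=> u u0; have h2 : (e u) ^+ 2 = 1 by rewrite -exprM -pm fermat1.
  have : (e u - 1) * (e u + 1) = 0 by rewrite -subr_sqr h2 expr1n subrr.
  move/eqP; rewrite mulf_eq0 => /orP [|]; first by rewrite subr_eq0 => /eqP; left.
  by rewrite addr_eq0 => /eqP; right.
have eN : forall u, e (- u) = e u.
  by move=> u; rewrite /e exprNn -signr_odd (negbTE em) expr0 mul1r.
have Tev : forall u, u != 0 -> (cheb_mod p d).[u + u^-1] = e u * (u + u^-1).
  move=> u u0; have [-> _] := cheb_pairE d u0.
  rewrite dm !exprS exprVn; case: (e2 u u0); rewrite /e => ->.
    by rewrite invr1 !mulr1 mul1r.
  by rewrite invrN invr1 !mulrN1 mulN1r opprD.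
set Nz := [set~ (0 : 'F_p)].
set S := (fun z => z + z^-1) @: Nz.
have ST : forall x, x \in S -> exists2 u, u != 0 & x = u + u^-1.
  by move=> x /imsetP [u]; rewrite in_setC1 => u0 ->; exists u.
have TS : forall u, u != 0 -> u + u^-1 \in S.
  by move=> u u0; apply/imsetP; exists u; rewrite ?in_setC1.
have -> : [set (cheb_mod p d).[y] | y : 'F_p] = S.
  apply/setP => x; apply/imsetP/idP => [[y _ ->]|xS].
    case: (boolP (y \in S)) => [/ST [u u0 ->]|yS].
      rewrite Tev //; case: (e2 u u0) => ->; first by rewrite mul1r TS.
      by rewrite mulN1r opprD -invrN TS // oppr_eq0.
    have nsq : forall t : 'F_p, t * t != y ^+ 2 / 4 - 1.
      move=> t; apply/eqP => ht; move: yS; apply/negP/negPn.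
      have t0 := two_neq0 pp op.
      have zw : (y / 2 + t) * (y / 2 - t) = 1.
        rewrite mulrC -subr_sqr (expr2 t) ht; field.
        by rewrite (_ : 4 = 2 * 2 :> 'F_p) ?mulf_neq0 // -natrM.
      have z0 : y / 2 + t != 0 by apply: contra_eq_neq zw => ->; rewrite mul0r eq_sym oner_neq0.
      have -> : y = (y / 2 + t) + (y / 2 + t)^-1.
        rewrite (_ : (y / 2 + t)^-1 = y / 2 - t); last first.
          by apply: (mulfI z0); rewrite zw mulfV.
        by field.
      exact: TS.
    have := nonS pp op hd nsq.
    move=> /eqP; rewrite -subr_eq0 (_ : 4 = 2 ^+ 2) ?subr_sqr; last by rewrite expr2 -natrM.
    rewrite mulf_eq0 subr_eq0 addr_eq0 => /orP [] /eqP ->.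
      by rewrite (_ : 2 = 1 + 1^-1) ?TS ?oner_neq0 // invr1.
    by rewrite (_ : - 2 = -1 + (-1)^-1) ?TS ?oppr_eq0 ?oner_neq0 // invrN invr1 -opprD.
  have [u u0 ->] := ST x xS.
  case: (e2 u u0) => eu.
    by exists (u + u^-1) => //; rewrite Tev // eu mul1r.
  exists (- u + (- u)^-1) => //; rewrite Tev ?oppr_eq0 // eN eu mulN1r.
  by rewrite invrN opprD !opprK.
rewrite (card_img2 (s := GRing.inv)).
- have -> : [set x in Nz | x^-1 == x] = [set 1; -1].
    apply/setP => x; rewrite !inE.
    case: (eqVneq x 0) => [->|x0] /=.
      by rewrite eq_sym oppr_eq0 oner_eq0.
    have -> : (x^-1 == x) = (x ^+ 2 == 1 ^+ 2).
      apply/eqP/eqP => [h|h]; first by rewrite expr2 -{1}h mulVf // expr1n.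
      by apply: (mulfI x0); rewrite mulfV // -expr2 h expr1n.
    by rewrite eqf_sqr.
  rewrite cards2 cardsC1 card_Fp //.
  rewrite (_ : (1 != -1) = true); last first.
    by apply/negP => /eqP h; move: (negx_eq (1 : 'F_p) pp op); rewrite -h eqxx oner_eq0.
  by rewrite -(prednK (prime_gt0 pp)) addn2.
- by move=> x; rewrite !in_setC1 invr_eq0.
- move=> x y; rewrite !in_setC1 => x0 y0.
  have -> : (x + x^-1 == y + y^-1) = ((x - y) * (x * y - 1) / (x * y) == 0).
    rewrite -subr_eq0; congr (_ == 0); field.
    by rewrite x0 y0.
  rewrite !mulf_eq0 invr_eq0 mulf_eq0 (negbTE x0) (negbTE y0) orbF subr_eq0 eq_sym.
  rewrite orbF; congr (_ || _); rewrite subr_eq0.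
  by rewrite -[RHS](inj_eq (mulfI x0)) mulfV.
- by move=> x _; rewrite invrK.
Qed.

Local Close Scope ring_scope.
Unset Implicit Arguments.

Theorem mainTheorem7 (d p : nat) :
  prime d -> prime p -> odd p ->
  (d = 2 \/ 2 * d = p + 1) ->
  #|leaves p d| = (p - 1)./2.
Proof.
move=> pd pp op hd.
have cI : #|[set ((cheb_mod p d).[y])%R | y : 'F_p]| * 2 = p.+1.
  case: hd => [->|hd]; first exact: cardI2.
  case: (eqVneq d 2) => [->|d2]; [exact: cardI2 | exact: cardIodd].
have hL : leaves p d = ~: [set ((cheb_mod p d).[y])%R | y : 'F_p].
  apply/setP => x; rewrite inE in_setC.
  apply/forallP/negP => [H /imsetP [y _ e]|H y].
    by move: (H y); rewrite e eqxx.
  by apply/eqP => e; apply: H; apply/imsetP; exists y.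
rewrite hL.
have := cardsC [set ((cheb_mod p d).[y])%R | y : 'F_p].
rewrite card_Fp //.
move: cI; set k := #|[set _ | _ : _]|.
set L := #|~: _| => cI h.
have -> : p - 1 = (k - 1).*2 by rewrite -muln2; lia.
rewrite doubleK; clearbody k L; lia.
Qed.
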